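(* Let $\tilde\gamma$ be a closed edge path in the Artin complex $D(B_3)$ with 10 edges whose vertices alternate between type $\hat s_3$ and type $\hat s_2$. If $\tilde\gamma$ is contained in a Falk subcomplex of type $s_3$, then $\tilde\gamma$ is not embedded.
   Context: $A(B_3)=\langle s_1,s_2,s_3 \mid s_1s_2s_1=s_2s_1s_2,\ s_1s_3=s_3s_1,\ s_2s_3s_2s_3=s_3s_2s_3s_2\rangle$ and $W(B_3)$ is its quotient by $s_i^2=1$. For $i=1,2,3$, $\hat s_i$ denotes the standard parabolic subgroup generated by the other two generators. The Artin complex $D(B_3)$ (resp. Coxeter complex $C(B_3)$) has vertices the cosets $g\hat s_i$ in $A(B_3)$ (resp. $W(B_3)$), of type $\hat s_i$, and a set of vertices spans a simplex iff the cosets have nonempty common intersection. Let $\rho:D(B_3)\to C(B_3)$ be induced by $A(B_3)\to W(B_3)$. A Falk subcomplex of type $s_3$: take a reflection $r\in W(B_3)$ conjugate to $s_3$, let $H$ be the subcomplex of $C(B_3)$ fixed pointwise by $r$, choose a component of $C(B_3)\setminus H$, let $U$ be the largest closed subcomplex of $C(B_3)$ contained in it, and take a lift of $U$ along $\rho$ (a subcomplex of $D(B_3)$ mapped isomorphically onto $U$ by $\rho$). *)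

(* Defs.v *)
From Stdlib Require Import Relations.
From mathcomp Require Import all_boot.
Set Implicit Arguments. Unset Strict Implicit. Unset Printing Implicit Defensive.

Definition s1 : 'I_3 := @Ordinal 3 0 isT.
Definition s2 : 'I_3 := @Ordinal 3 1 isT.
Definition s3 : 'I_3 := @Ordinal 3 2 isT.

(* a letter (i, b) is s_i (b = false) or s_i^-1 (b = true); group elements are
   represented by words, the product is concatenation *)
Notation letter := ('I_3 * bool)%type.
Notation word := (seq letter).
Definition inv_letter (l : letter) : letter := (l.1, ~~ l.2).
Definition winv (w : word) : word := rev (map inv_letter w).
Definition gen (i : 'I_3) : word := [:: (i, false)].

Definition artinB3_rel (a b : word) : Prop :=
  (a = gen s1 ++ gen s2 ++ gen s1 /\ b = gen s2 ++ gen s1 ++ gen s2) \/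
  (a = gen s1 ++ gen s3 /\ b = gen s3 ++ gen s1) \/
  (a = gen s2 ++ gen s3 ++ gen s2 ++ gen s3 /\
   b = gen s3 ++ gen s2 ++ gen s3 ++ gen s2).

Definition coxeterB3_rel (a b : word) : Prop :=
  artinB3_rel a b \/ exists i, a = gen i ++ gen i /\ b = [::].

(* equality in the group presented by the relations Rel: the congruence on
   words generated by free cancellation and the relations *)
Inductive wcong (Rel : word -> word -> Prop) : word -> word -> Prop :=
| wc_refl w : wcong Rel w w
| wc_sym u v : wcong Rel u v -> wcong Rel v u
| wc_trans u v w : wcong Rel u v -> wcong Rel v w -> wcong Rel u w
| wc_free u l v : wcong Rel (u ++ l :: inv_letter l :: v) (u ++ v)
| wc_rel u a b v : Rel a b -> wcong Rel (u ++ a ++ v) (u ++ b ++ v).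

Definition Aeq := wcong artinB3_rel.
Definition Weq := wcong coxeterB3_rel.

(* h belongs to the standard parabolic subgroup \hat s_i (generated by the
   generators other than s_i), in the group with equality E *)
Definition in_hat (E : word -> word -> Prop) (i : 'I_3) (h : word) : Prop :=
  exists h', E h h' /\ all (fun l : letter => l.1 != i) h'.

(* a vertex (i, g) is the coset g \hat s_i, of type \hat s_i *)
Notation vertex := ('I_3 * word)%type.

Definition in_coset (E : word -> word -> Prop) (v : vertex) (x : word) : Prop :=
  exists h, in_hat E v.1 h /\ E x (v.2 ++ h).

Definition same_vertex (E : word -> word -> Prop) (v w : vertex) : Prop :=
  v.1 = w.1 /\ forall x, in_coset E v x <-> in_coset E w x.

Definition simplex (E : word -> word -> Prop) (s : seq vertex) : Prop :=
  exists x, forall v, v \in s -> in_coset E v x.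

Definition same_simplex (E : word -> word -> Prop) (s t : seq vertex) : Prop :=
  (forall v, v \in s -> exists w, w \in t /\ same_vertex E v w) /\
  (forall w, w \in t -> exists v, v \in s /\ same_vertex E v w).

(* rho : D(B_3) -> C(B_3), induced by A(B_3) -> W(B_3): on representatives it is
   the identity (g \hat s_i |-> image(g) \hat s_i); only the equality changes *)
Definition rho (v : vertex) : vertex := v.

Definition is_reflection_s3 (r : word) : Prop :=
  exists w, Weq r (w ++ gen s3 ++ winv w).

Definition wact (r : word) (v : vertex) : vertex := (v.1, r ++ v.2).

(* vertices of the fixed subcomplex H of r (H is the full subcomplex on them,
   since the action is type preserving) *)
Definition fixedC (r : word) (v : vertex) : Prop := same_vertex Weq (wact r v) v.

Definition adjC (r : word) (v w : vertex) : Prop :=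
  ~ fixedC r v /\ ~ fixedC r w /\ simplex Weq [:: v; w].

Definition componentC (r : word) (v0 : vertex) (v : vertex) : Prop :=
  clos_refl_trans vertex (adjC r) v0 v.

(* U: largest closed subcomplex of C(B_3) contained in that component,
   i.e. the simplices all of whose vertices lie in the component *)
Definition falkU (r : word) (v0 : vertex) (t : seq vertex) : Prop :=
  simplex Weq t /\ forall v, v \in t -> componentC r v0 v.

Definition subcomplexD (L : seq vertex -> Prop) : Prop :=
  [/\ forall s, L s -> simplex Aeq s,
      forall s t, L s -> {subset t <= s} -> L t &
      forall s t, L s -> same_simplex Aeq s t -> L t].

(* L is a lift of U along rho: rho maps L isomorphically onto U *)
Definition lift_of (L U : seq vertex -> Prop) : Prop :=
  [/\ subcomplexD L,
      forall s, L s -> U (map rho s),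
      forall v w, L [:: v] -> L [:: w] ->
        same_vertex Weq (rho v) (rho w) -> same_vertex Aeq v w &
      forall t, U t -> exists s, L s /\ same_simplex Weq (map rho s) t].

Definition falk_subcomplex_s3 (L : seq vertex -> Prop) : Prop :=
  exists r v0, [/\ is_reflection_s3 r, ~ fixedC r v0 & lift_of L (falkU r v0)].

Definition alt_closed_path10 (p : 'I_10 -> vertex) : Prop :=
  [/\ forall k, (p k).1 = s3 \/ (p k).1 = s2,
      forall k, (p k).1 <> (p (ordS k)).1 &
      forall k, simplex Aeq [:: p k; p (ordS k)]].

Definition path_in (L : seq vertex -> Prop) (p : 'I_10 -> vertex) : Prop :=
  forall k, L [:: p k; p (ordS k)].

Definition embedded10 (p : 'I_10 -> vertex) : Prop :=
  forall k l, same_vertex Aeq (p k) (p l) -> k = l.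

(* Main.v *)
Require Import Defs.
From Stdlib Require Import Relations.
From mathcomp Require Import all_boot.
Set Implicit Arguments. Unset Strict Implicit. Unset Printing Implicit Defensive.

Section Cong.
Variable Rel : word -> word -> Prop.
Local Notation E := (wcong Rel).

Lemma E_cat x y u v : E u v -> E (x ++ u ++ y) (x ++ v ++ y).
Proof.
elim=> {u v}.
- by move=> w; apply: wc_refl.
- by move=> u v _ IH; apply: wc_sym.
- by move=> u v w _ IH1 _ IH2; apply: wc_trans IH2.
- move=> u l v.
  have -> : x ++ (u ++ [:: l, inv_letter l & v]) ++ y = (x ++ u) ++ [:: l, inv_letter l & v ++ y].
    by rewrite -!catA.
  have -> : x ++ (u ++ v) ++ y = (x ++ u) ++ (v ++ y) by rewrite -!catA.
  exact: wc_free.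
- move=> u a b v H.
  have -> : x ++ (u ++ a ++ v) ++ y = (x ++ u) ++ a ++ (v ++ y) by rewrite -!catA.
  have -> : x ++ (u ++ b ++ v) ++ y = (x ++ u) ++ b ++ (v ++ y) by rewrite -!catA.
  exact: wc_rel.
Qed.

Lemma E_catl x u v : E u v -> E (x ++ u) (x ++ v).
Proof. by move=> H; have := E_cat x [::] H; rewrite !cats0. Qed.

Lemma E_catr y u v : E u v -> E (u ++ y) (v ++ y).
Proof. by move=> H; have := E_cat [::] y H. Qed.

Lemma E_catE u u' v v' : E u u' -> E v v' -> E (u ++ v) (u' ++ v').
Proof. move=> H1 H2; apply: wc_trans (E_catr v H1) (E_catl u' H2). Qed.

Lemma inv_letterK : involutive inv_letter.
Proof. by case=> i b; rewrite /inv_letter /= negbK. Qed.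

Lemma winvK : involutive winv.
Proof. by move=> w; rewrite /winv map_rev revK -map_comp map_id_in // => l _ /=; rewrite inv_letterK. Qed.

Lemma winv_cons l w : winv (l :: w) = winv w ++ [:: inv_letter l].
Proof. by rewrite /winv /= rev_cons cats1. Qed.

Lemma E_invr w : E (w ++ winv w) [::].
Proof.
elim: w => [|l w IH] /=; first exact: wc_refl.
rewrite winv_cons catA.
apply: wc_trans (_ : E ([:: l] ++ [::] ++ [:: inv_letter l]) [::]).
  by rewrite -[l :: _]/([:: l] ++ _); apply: E_cat.
exact: (wc_free Rel [::] l [::]).
Qed.

Lemma E_invl w : E (winv w ++ w) [::].
Proof. by have := E_invr (winv w); rewrite winvK. Qed.

Lemma E_winv u v : E u v -> E (winv u) (winv v).
Proof.
move=> H.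
apply: wc_trans (_ : E (winv u ++ (v ++ winv v)) _).
  by have := E_catl (winv u) (wc_sym (E_invr v)); rewrite cats0.
rewrite catA.
apply: wc_trans (_ : E (winv u ++ u ++ winv v) _).
  by rewrite -catA; apply: E_catl; apply: E_catr; apply: wc_sym.
rewrite catA; have := E_catr (winv v) (E_invl u); done.
Qed.

End Cong.

Definition par (w : word) := odd (count (fun l : letter => l.1 == s3) w).

Lemma par_cat u v : par (u ++ v) = par u (+) par v.
Proof. by rewrite /par count_cat oddD. Qed.

Lemma par_W u v : Weq u v -> par u = par v.
Proof.
move=> H; elim: H => {u v} //.
- by move=> u v w _ -> _ ->.
- move=> u l v; rewrite /par /= !count_cat /=.
  by rewrite !oddD (addbA (odd (_ == _))) addbb.
- move=> u a b v H; rewrite !par_cat; congr (_ (+) (_ (+) _)).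
  case: H => [[[->->]|[[->->]|[->->]]]|[i [->->]]] //.
  by rewrite par_cat addbb.
Qed.

Lemma par_nos3 w : all (fun l : letter => l.1 != s3) w -> par w = false.
Proof.
by move=> H; rewrite /par (eq_in_count (a2 := pred0)) ?count_pred0 // => l /(allP H) /negbTE.
Qed.

Lemma par_winv w : par (winv w) = par w.
Proof. by rewrite /par /winv count_rev count_map. Qed.

Definition nf (a b : bool) : word := (if a then gen s1 else [::]) ++ (if b then gen s3 else [::]).

Lemma W_gen_inv i : Weq [:: (i, true)] (gen i).
Proof.
apply: wc_trans (_ : Weq [:: (i,true); (i,false); (i,false)] _).
  apply: wc_sym. have := @wc_rel coxeterB3_rel [:: (i,true)] (gen i ++ gen i) [::] [::].
  rewrite !cats0; apply; right; by exists i.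
exact: (wc_free coxeterB3_rel [::] (i,true) [:: (i,false)]).
Qed.

Lemma W_ii i w : Weq ((i,false) :: (i,false) :: w) w.
Proof.
have := @wc_rel coxeterB3_rel [::] (gen i ++ gen i) [::] w; apply; right; by exists i.
Qed.

Lemma W_31 w : Weq ((s3,false) :: (s1,false) :: w) ((s1,false) :: (s3,false) :: w).
Proof.
apply: wc_sym; have := @wc_rel coxeterB3_rel [::] (gen s1 ++ gen s3) (gen s3 ++ gen s1) w.
apply; left; right; left; done.
Qed.

Lemma W_nf w : all (fun l : letter => l.1 != s2) w ->
  exists a, Weq w (nf a (par w)).
Proof.
elim: w => [|[i e] w IH] /=; first by exists false; apply: wc_refl.
case/andP => Hi /IH [a Ha].
have Hl : Weq ((i, e) :: w) ((i, false) :: nf a (par w)).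
  apply: wc_trans (_ : Weq ([:: (i,e)] ++ nf a (par w) ++ [::]) _).
    by rewrite cats0; exact: (E_catl [:: (i,e)] Ha).
  rewrite cats0; case: e; last exact: wc_refl.
  exact: (E_catr (nf a (par w)) (W_gen_inv i)).
have -> : par ((i, e) :: w) = (i == s3) (+) par w by rewrite /par /=; case: (i == s3).
have : i = s1 \/ i = s3.
  by move: Hi; clear Hl; case: i => [[|[|[|//]]] Hm] //= _; [left|right]; apply: val_inj.
case=> Ei; subst i.
- case: a Ha Hl => Ha Hl /=.
  + exists false; apply: wc_trans Hl _; exact: W_ii.
  + by exists true.
- case: a Ha Hl => Ha Hl; case: (par w) Ha Hl => Ha Hl /=.
  + exists true; apply: wc_trans Hl _. apply: wc_trans (W_31 _) _.
    have := E_catl [:: (s1,false)] (W_ii s3 [::]); done.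
  + by exists true; apply: wc_trans Hl _; apply: W_31.
  + by exists false; apply: wc_trans Hl _; apply: W_ii.
  + by exists false.
Qed.

Lemma in_hat_cat Rel i h k : in_hat (wcong Rel) i h -> in_hat (wcong Rel) i k -> in_hat (wcong Rel) i (h ++ k).
Proof.
move=> [h' [E1 A1]] [k' [E2 A2]]; exists (h' ++ k'); split; first exact: E_catE.
by rewrite all_cat A1 A2.
Qed.

Lemma in_hat_winv Rel i h : in_hat (wcong Rel) i h -> in_hat (wcong Rel) i (winv h).
Proof.
move=> [h' [E1 A1]]; exists (winv h'); split; first exact: E_winv.
by rewrite /winv all_rev all_map.
Qed.

Lemma E_move Rel x u h : wcong Rel x (u ++ h) -> wcong Rel u (x ++ winv h).
Proof.
move=> H; apply: wc_trans (_ : wcong Rel (u ++ h ++ winv h) _).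
  by have := E_catl u (wc_sym (E_invr Rel h)); rewrite cats0.
by rewrite catA; apply: E_catr; apply: wc_sym.
Qed.

Lemma coset_shift Rel (v w : vertex) k : v.1 = w.1 -> in_hat (wcong Rel) v.1 k ->
  wcong Rel w.2 (v.2 ++ k) -> same_vertex (wcong Rel) v w.
Proof.
move=> e Hk Hw; split=> // x; split.
- move=> [h [Hh Hx]]; exists (winv k ++ h); split.
    by rewrite -e; apply: in_hat_cat => //; apply: in_hat_winv.
  apply: wc_trans Hx _; rewrite catA; apply: E_catr; exact: E_move.
- move=> [h [Hh Hx]]; exists (k ++ h); split.
    by apply: in_hat_cat => //; rewrite e.
  apply: wc_trans Hx _; rewrite catA; exact: E_catr.
Qed.

Lemma step (a b c : vertex) : a.1 = s3 -> b.1 = s2 -> c.1 = s3 ->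
  simplex Weq [:: a; b] -> simplex Weq [:: b; c] -> par a.2 = par c.2 ->
  same_vertex Weq a c.
Proof.
move=> ea eb ec [x Hx] [y Hy] ep.
have [h1 [H1 X1]] := Hx a (mem_head _ _).
have Hb1 : b \in [:: a; b] by rewrite !inE eqxx orbT.
have [h2 [H2 X2]] := Hx b Hb1.
have [h4 [H4 Y4]] := Hy b (mem_head _ _).
have Hc1 : c \in [:: b; c] by rewrite !inE eqxx orbT.
have [h3 [H3 Y3]] := Hy c Hc1.
rewrite ea in H1; rewrite eb in H2 H4; rewrite ec in H3.
have Eb : Weq b.2 ((a.2 ++ h1) ++ winv h2).
  apply: wc_trans (E_move X2) _; apply: E_catr; exact: X1.
have Ec : Weq c.2 ((b.2 ++ h4) ++ winv h3).
  apply: wc_trans (E_move Y3) _; apply: E_catr; exact: Y4.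
move: H2 H4 => [h2' [E2 A2]] [h4' [E4 A4]].
set m' := winv h2' ++ h4'.
have Em : Weq (winv h2 ++ h4) m' by apply: E_catE => //; apply: E_winv.
have Am : all (fun l : letter => l.1 != s2) m'.
  by rewrite all_cat A4 andbT /winv all_rev all_map.
have [a0 Ha0] := W_nf Am.
clearbody m'.
have Ec' : Weq c.2 (a.2 ++ (h1 ++ m' ++ winv h3)).
  apply: wc_trans Ec _; rewrite !catA; apply: E_catr.
  apply: wc_trans (_ : Weq (((a.2 ++ h1) ++ winv h2) ++ h4) _).
    by apply: E_catr.
  by rewrite -!catA; apply: E_catl; apply: E_catl.
have pm : par m' = false.
  move: ep; rewrite (par_W Ec') !par_cat par_winv.
  move: H1 H3 => [h1' [E1 A1]] [h3' [E3 A3]].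
  rewrite (par_W E1) (par_nos3 A1) (par_W E3) (par_nos3 A3).
  by case: (par a.2); case: (par m').
rewrite pm in Ha0.
apply: (coset_shift (k := h1 ++ nf a0 false ++ winv h3)); first by rewrite ea ec.
  rewrite ea; apply: in_hat_cat => //; apply: in_hat_cat; last exact: in_hat_winv.
  by exists (nf a0 false); split; [apply: wc_refl | clear Ha0; case: a0].
apply: wc_trans Ec' _; apply: E_catl; apply: E_catl; exact: E_catr.
Qed.

Lemma ordSS_neq (k : 'I_10) : k <> ordS (ordS k).
Proof.
move=> /(congr1 val); case: k => [[|[|[|[|[|[|[|[|[|[|//]]]]]]]]]] Hk] //.
Qed.

Lemma ordS10 (k : 'I_10) : iter 10 (@ordS 10) k = k.
Proof.
apply: val_inj; case: k => [[|[|[|[|[|[|[|[|[|[|//]]]]]]]]]] Hk] //.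
Qed.

Theorem mainTheorem14 (L : seq vertex -> Prop) (p : 'I_10 -> vertex) :
  falk_subcomplex_s3 L -> alt_closed_path10 p -> path_in L p -> ~ embedded10 p.
Proof.
move=> [r [v0 [_ _ [[LS Lsub Lsame] LU Linj Lsurj]]]] [Ht Hne Hsimp] Hpath Hemb.
have SW k : simplex Weq [:: p k; p (ordS k)] by case: (LU _ (Hpath k)).
have L1 k : L [:: p k].
  apply: Lsub (Hpath k) _ => z; rewrite inE => /eqP ->; exact: mem_head.
have D k l : same_vertex Weq (p k) (p l) -> k = l.
  by move=> H; apply: Hemb; apply: Linj.
have T2 k : (p k).1 = s3 -> (p (ordS k)).1 = s2.
  by move=> e; have := Hne k; case: (Ht (ordS k)) => // ->; rewrite e.
have T3 k : (p k).1 = s2 -> (p (ordS k)).1 = s3.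
  by move=> e; have := Hne k; case: (Ht (ordS k)) => // ->; rewrite e.
have St k : (p k).1 = s3 -> (p (ordS (ordS k))).1 = s3 /\
    par (p (ordS (ordS k))).2 = ~~ par (p k).2.
  move=> e; have e1 := T2 _ e; have e2 := T3 _ e1; split => //.
  have S := step e e1 e2 (SW k) (SW (ordS k)).
  case: (par (p k).2 =P par (p (ordS (ordS k))).2) => [h|h].
    by have := D _ _ (S h); move/ordSS_neq.
  by move: h; case: (par (p k).2); case: (par (p (ordS (ordS k))).2).
have key k : (p k).1 = s3 -> False.
  move=> e0.
  have [e1 q1] := St _ e0. have [e2 q2] := St _ e1. have [e3 q3] := St _ e2.
  have [e4 q4] := St _ e3. have [e5 q5] := St _ e4.
  move: q5; rewrite q4 q3 q2 q1 !negbK.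
  have -> : ordS (ordS (ordS (ordS (ordS (ordS (ordS (ordS (ordS (ordS k))))))))) = k.
    exact: ordS10.
  by case: (par (p k).2).
case: (Ht ord0) => e; first exact: key e.
exact: key _ (T3 _ e).
Qed.
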